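(* Let $\{a(n)\}_{n\in\mathbb{N}}$ be a sequence of non-negative numbers with $\sum_{n=1}^{\infty}a(n)\le 1$. Then for every $\varepsilon>0$ there exist infinitely many $n\in\mathbb{N}$ such that $\sum_{\ell=1}^{n}a(\ell\cdot n)<\frac{\varepsilon}{n}$. *)

(* Defs.v *)
From Stdlib Require Import Reals.
Open Scope R_scope.

Fixpoint sum1 (f : nat -> R) (n : nat) : R :=
  match n with
  | O => 0
  | S m => sum1 f m + f (S m)
  end.

(* Main.v *)
Require Import Defs.
From Stdlib Require Import Reals.
From Stdlib Require Import Classical.
From mathcomp Require ssreflect.

Module Helpers.
From mathcomp Require Import all_boot all_order all_algebra.
From mathcomp Require Import zify lra.
From mathcomp Require Import Rstruct.
Set Implicit Arguments. Unset Strict Implicit. Unset Printing Implicit Defensive.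
Import Order.TTheory GRing.Theory Num.Theory.
Local Close Scope R_scope.
Local Open Scope nat_scope.

Definition pik (k : nat) : nat_pred := [pred p | p < k].

Lemma count_dvd p N : 0 < p -> \sum_(1 <= n < N.+1) (p %| n) = N %/ p.
Proof.
move=> p0; elim: N => [|N IH]; first by rewrite big_geq // div0n.
by rewrite big_nat_recr //= IH divnS // addnC.
Qed.

Lemma stepA k N : 0 < N ->
  N <= \sum_(0 <= n < N.+1) (pik k).-nat n + \sum_(k <= p < N.+1 | prime p) N %/ p.
Proof.
move=> N0.
rewrite {1}(_ : N = \sum_(1 <= n < N.+1) 1); last by rewrite sum_nat_const_nat muln1 subn1.
apply: (@leq_trans (\sum_(1 <= n < N.+1) ((pik k).-nat n + \sum_(k <= p < N.+1 | prime p) (p %| n)))).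
  rewrite [X in X <= _]big_nat_cond [X in _ <= X]big_nat_cond.
  apply: leq_sum => n /andP [/andP [n1 nN] _].
  case: (leqP 1 (\sum_(k <= p < N.+1 | prime p) (p %| n))) => [H|H].
    apply: (leq_trans H); exact: leq_addl.
  suff -> : (pik k).-nat n by [].
  apply/pnatP => // p pp pn; rewrite inE /=; apply: contraTT H => pk.
  rewrite -leqNgt big_mkcond (bigD1_seq p) //= ?iota_uniq //.
    by rewrite pp pn leq_addr.
  rewrite mem_index_iota leqNgt pk /=.
  exact: leq_ltn_trans (dvdn_leq n1 pn) nN.
rewrite big_split /= leq_add //.
  by rewrite [X in _ <= X](@big_cat_nat _ _ _ 1) //= leq_addl.
rewrite exchange_big /= leq_eqVlt; apply/orP; left; apply/eqP.
by apply: eq_bigr => p pp; rewrite count_dvd // prime_gt0.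
Qed.
Lemma logn_leT p n T : 0 < n -> n <= 2 ^ T -> logn p n <= T.
Proof.
move=> n0 nT; case: (posnP (logn p n)) => [->|e0] //.
have pp : prime p by move: e0; rewrite logn_gt0 mem_primes => /and3P[].
rewrite -(@leq_exp2l 2) //; apply: leq_trans nT.
apply: leq_trans (dvdn_leq n0 (pfactor_dvdnn p n)).
by rewrite leq_exp2r // prime_gt1.
Qed.

Lemma stepB k T : \sum_(0 <= n < (2 ^ T).+1) (pik k).-nat n <= T.+1 ^ k.
Proof.
rewrite big_mkord.
rewrite (eq_bigr (fun n : 'I_(2 ^ T).+1 => if (pik k).-nat n then 1 else 0)); last by move=> i _; case: ifP.
rewrite -big_mkcond /= sum1_card.
pose f (n : 'I_(2 ^ T).+1) := [ffun i : 'I_k => (inord (logn i n) : 'I_T.+1)].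
rewrite -(@card_in_imset _ _ f).
  by apply: leq_trans (max_card _) _; rewrite card_ffun !card_ord.
move=> m n mk' nk' /ffunP fmn.
have mk : (pik k).-nat m := mk'.
have nk : (pik k).-nat n := nk'.
have m0 : 0 < m by case/andP: mk.
have n0 : 0 < n by case/andP: nk.
apply: val_inj => /=.
rewrite -(part_pnat_id mk) -(part_pnat_id nk).
apply: eq_partn_from_log => // p; rewrite inE /= => pk.
have := fmn (Ordinal pk); rewrite !ffunE /= => /(congr1 val) /=.
rewrite !inordK // ltnS; apply: logn_leT => //; rewrite -ltnS; exact: ltn_ord.
Qed.
Lemma expbound k : k * (2 * k + 2) + 2 <= 2 ^ (2 * k + 2).
Proof.
elim: k => [|k IH] //.
have -> : 2 * k.+1 + 2 = (2 * k + 2).+2 by lia.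
rewrite !expnS. lia.
Qed.

Lemma Texists k : exists T, 2 * T.+1 ^ k <= 2 ^ T.
Proof.
exists (2 ^ (2 * k + 2)).-1.
rewrite prednK ?expn_gt0 // -expnM -expnS leq_exp2l //.
have := expbound k.
have h : 0 < 2 ^ (2 * k + 2) by rewrite expn_gt0.
lia.
Qed.

Local Open Scope ring_scope.

Lemma block (R : realFieldType) k : exists N,
  1 / 2 <= \sum_(k <= p < N | prime p) (p%:R : R)^-1.
Proof.
have [T HT] := Texists k.
pose N := (2 ^ T)%N.
have N0 : (0 < N)%N by rewrite expn_gt0.
have hA := stepA k N0.
have hB := stepB k T.
have hN : (N <= 2 * \sum_(k <= p < N.+1 | prime p) N %/ p)%N.
  move: hA hB HT; rewrite -/N; lia.
exists N.+1.
have hR : (N%:R : R) <= 2 * \sum_(k <= p < N.+1 | prime p) (N%/p)%:R.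
  by rewrite -natr_sum -(natrM R 2) ler_nat.
have hR2 : \sum_(k <= p < N.+1 | prime p) ((N%/p)%:R : R)
   <= N%:R * \sum_(k <= p < N.+1 | prime p) (p%:R : R)^-1.
  rewrite mulr_sumr; apply: ler_sum => p pp.
  have p0 : (0 : R) < p%:R by rewrite ltr0n prime_gt0.
  rewrite ler_pdivlMr //.
  by rewrite -natrM ler_nat leq_trunc_div.
have Np : (0 : R) < N%:R by rewrite ltr0n.
set S := \sum_(k <= p < N.+1 | prime p) (p%:R : R)^-1 in hR2 *.
set S' := \sum_(k <= p < N.+1 | prime p) ((N%/p)%:R : R) in hR hR2.
have : N%:R * 1 <= N%:R * (2 * S) by nra.
rewrite ler_pM2l //; lra.
Qed.

Lemma diverge_nat (R : realFieldType) M j : exists L, (M <= L)%N /\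
  j%:R / 2 <= \sum_(M <= p < L | prime p) (p%:R : R)^-1.
Proof.
elim: j => [|j [L [ML IH]]].
  by exists M; rewrite big_geq // mul0r.
have [N HN] := block R L.
exists (maxn L N); split; first by rewrite (leq_trans ML) // leq_maxl.
rewrite (@big_cat_nat _ _ _ L) ?leq_maxl //=.
have : \sum_(L <= p < N | prime p) (p%:R : R)^-1 <= \sum_(L <= p < maxn L N | prime p) (p%:R : R)^-1.
  case: (leqP N L) => NL.
    by move: HN; rewrite big_geq // => h; lra.
  by [].
rewrite -natr1 mulrDl; lra.
Qed.

Lemma diverge (R : archiFieldType) M (K : R) : exists L, (M <= L)%N /\
  K < \sum_(M <= p < L | prime p) (p%:R : R)^-1.
Proof.
have [j Hj] : exists j : nat, K < j%:R / 2.
  case: (lerP K 0) => K0; first by exists 1%N; lra.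
  exists (Num.Def.archi_bound (2 * K)); have := archi_boundP (x := 2 * K); lra.
have [L [ML H]] := diverge_nat R M j.
by exists L; split => //; lra.
Qed.

Lemma subsum (R : realFieldType) (f : nat -> R) (s t : seq nat) :
  uniq s -> uniq t -> {subset s <= t} -> (forall x, x \in t -> 0 <= f x) ->
  \sum_(x <- s) f x <= \sum_(x <- t) f x.
Proof.
move=> us ut st f0.
have pe : perm_eq s [seq x <- t | x \in s].
  apply: uniq_perm => //; first exact: filter_uniq.
  by move=> x; rewrite mem_filter; case xs: (x \in s) => //=; rewrite st.
rewrite (perm_big _ pe) big_filter big_mkcond /= big_seq [X in _ <= X]big_seq.
by apply: ler_sum => x xt; case: ifP => // _; exact: f0.
Qed.

Lemma dcount (R : realFieldType) (f : nat -> R) M L :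
  (forall n, (1 <= n)%N -> 0 <= f n) ->
  \sum_(M <= p < L | prime p) \sum_(1 <= l < p.+1) f (l * p)%N
    <= \sum_(1 <= m < (L * L).+1) f m.
Proof.
move=> f0.
rewrite -big_filter.
set r := [seq p <- index_iota M L | prime p].
rewrite -(big_allpairs_dep (h := fun p l : nat => (l * p)%N) (r1 := r) (r2 := fun p => index_iota 1 p.+1) (F := f)).
apply: subsum.
- apply: allpairs_uniq_dep.
  + exact/filter_uniq/iota_uniq.
  + by move=> x _; exact: iota_uniq.
  + move=> [p l] [q m] /allpairsPdep [p' [l' [pr lr [-> ->]]]].
    move=> /allpairsPdep [q' [m' [qr mr [-> ->]]]] /= eq.
    move: pr qr lr mr; rewrite !mem_filter !mem_index_iota.
    move=> /andP [pp _] /andP [qp _] /andP [l1 lp] /andP [m1 mq].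
    have H1 : (p' <= q')%N.
      case: (eqVneq p' q') => [->//|ne].
      have : (p' %| m' * q')%N by rewrite -eq dvdn_mull.
      rewrite Euclid_dvdM // (dvdn_prime2 pp qp) // (negbTE ne) orbF => /(dvdn_leq m1); lia.
    have H2 : (q' <= p')%N.
      case: (eqVneq q' p') => [->//|ne].
      have : (q' %| l' * p')%N by rewrite eq dvdn_mull.
      rewrite Euclid_dvdM // (dvdn_prime2 qp pp) // (negbTE ne) orbF => /(dvdn_leq l1); lia.
    have epq : p' = q' by lia.
    subst q'.
    have elm : l' = m'.
      by apply/eqP; rewrite -(eqn_pmul2r (prime_gt0 pp)) eq.
    by subst m'.
- exact: iota_uniq.
- move=> x /allpairsPdep [p [l [pr lr ->]]].
  move: pr lr; rewrite mem_filter !mem_index_iota => /andP [pp /andP [_ pL]] /andP [l1 lp].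
  apply/andP; split; first by rewrite muln_gt0 l1 prime_gt0.
  rewrite ltnS leq_mul //; lia.
- by move=> x; rewrite mem_index_iota => /andP [x1 _]; exact: f0.
Qed.

Lemma sum1E (f : nat -> R) n : sum1 f n = \sum_(1 <= i < n.+1) f i.
Proof.
elim: n => [|n IH]; first by rewrite big_geq.
by rewrite big_nat_recr //= IH.
Qed.

Lemma main' (a : nat -> R)
  (Ha_nonneg : forall n, Peano.le 1 n -> Rle 0 (a n))
  (Ha_sum : forall N, Rle (sum1 a N) 1) :
  forall eps, Rlt 0 eps ->
  forall M : nat, exists n : nat, Peano.le M n /\ Peano.le 1 n /\
    Rlt (sum1 (fun l => a (Nat.mul l n)) n) (Rdiv eps (INR n)).
Proof.
move=> eps e0 M; apply: NNPP => Hn.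
have H : forall n, (M <= n)%N -> (1 <= n)%N ->
    eps / n%:R <= \sum_(1 <= l < n.+1) a (l * n)%N.
  move=> n Mn n1; apply/RleP; rewrite -sum1E -INRE -RdivE.
  apply: Rnot_lt_le => Hlt; apply: Hn; exists n.
  by split; [exact/ssrnat.leP|split; [exact/ssrnat.leP|]].
have e0' : 0 < eps by exact/RltP.
have [L [ML HL]] := diverge (maxn M 1) (1 / eps).
have f0 : forall n, (1 <= n)%N -> 0 <= a n by move=> n /ssrnat.leP n1; exact/RleP/Ha_nonneg.
have hD := dcount (maxn M 1) L f0.
have hS : \sum_(1 <= m < (L * L).+1) a m <= 1 by rewrite -sum1E; exact/RleP.
have hB : eps * \sum_(maxn M 1 <= p < L | prime p) (p%:R : R)^-1
   <= \sum_(maxn M 1 <= p < L | prime p) \sum_(1 <= l < p.+1) a (l * p)%N.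
  rewrite mulr_sumr big_nat_cond [X in _ <= X]big_nat_cond.
  apply: ler_sum => p /andP [/andP [Mp _] _].
  apply: H; first by apply: leq_trans Mp; exact: leq_maxl.
  by apply: leq_trans Mp; exact: leq_maxr.
have : 1 < eps * \sum_(maxn M 1 <= p < L | prime p) (p%:R : R)^-1.
  by move: HL; rewrite ltr_pdivrMr // mulrC.
move=> h; lra.
Qed.

End Helpers.

Open Scope R_scope.

Theorem lemma5 (a : nat -> R)
  (Ha_nonneg : forall n, (1 <= n)%nat -> 0 <= a n)
  (Ha_sum : forall N, sum1 a N <= 1) :
  forall eps, 0 < eps ->
  forall M : nat, exists n : nat, (M <= n)%nat /\ (1 <= n)%nat /\
    sum1 (fun l => a (l * n)%nat) n < eps / INR n.
Proof.
exact (@Helpers.main' a Ha_nonneg Ha_sum).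
Qed.
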